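(* Let $g$ be the Lorentzian form on $\mathbb{R}^4$ with matrix $\mathrm{diag}(1,1,1,-c^2)$ in the canonical basis ($c>0$), and let $\mathcal{L}^{\uparrow}_+$ be the proper orthochronous Lorentz group of $g$ (the linear maps preserving $g$, with determinant $1$, and preserving the time orientation). If $\Lambda$ is an additive subgroup of $\mathbb{R}^4$ with $L(\Lambda)\subseteq\Lambda$ for all $L\in\mathcal{L}^{\uparrow}_+$, then $\Lambda=\{0\}$ or $\Lambda=\mathbb{R}^4$. *)

(* Defs.v *)
(* Vectors of R^4 are row vectors 'rV[R]_4; a linear map
   R^4 -> R^4 is a matrix M acting by v |-> v *m M.  Coordinate 3 is time. *)
From HB Require Import structures.
From mathcomp Require Import all_boot all_order all_algebra.
From mathcomp Require Import reals.
Set Implicit Arguments. Unset Strict Implicit. Unset Printing Implicit Defensive.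
Import Order.TTheory GRing.Theory Num.Theory.
Local Open Scope ring_scope.

Definition tidx : 'I_4 := @Ordinal 4 3 erefl.

Definition lorentz_form {R : realType} (c : R) (u v : 'rV[R]_4) : R :=
  u ord0 (inord 0) * v ord0 (inord 0) + u ord0 (inord 1) * v ord0 (inord 1)
  + u ord0 (inord 2) * v ord0 (inord 2) - c ^+ 2 * (u ord0 tidx * v ord0 tidx).

Definition future_timelike {R : realType} (c : R) (v : 'rV[R]_4) : Prop :=
  lorentz_form c v v < 0 /\ 0 < v ord0 tidx.

Definition proper_orthochronous {R : realType} (c : R) (M : 'M[R]_4) : Prop :=
  [/\ forall u v, lorentz_form c (u *m M) (v *m M) = lorentz_form c u v,
      \det M = 1
    & forall v, future_timelike c v -> future_timelike c (v *m M)].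

Definition additive_subgroup {R : realType} (L : 'rV[R]_4 -> Prop) : Prop :=
  L 0 /\ forall u v, L u -> L v -> L (u - v).

(* Main.v *)
Require Import Defs.
From HB Require Import structures.
From mathcomp Require Import all_boot all_order all_algebra.
From mathcomp Require Import reals ring lra.
From Stdlib Require Import Classical_Prop.
Import Order.TTheory GRing.Theory Num.Theory.
Local Open Scope ring_scope.

Section S.
Variable R : realType.

Definition mkMn n (f : nat -> nat -> R) : 'M[R]_n := \matrix_(i < n, j < n) f i j.
Lemma det_mkS n (f : nat -> nat -> R) :
  \det (mkMn n.+1 f) =
  \sum_(j < n.+1) f 0%N j * ((-1) ^+ j * \det (mkMn n (fun x y => f (bump 0 x) (bump j y)))).
Proof.
rewrite /mkMn (expand_det_row _ ord0); apply: eq_bigr => j _.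
rewrite mxE /cofactor; congr (_ * (_ * \det _)).
by apply/matrixP => i k; rewrite !mxE.
Qed.

Lemma det_mk0 (f : nat -> nat -> R) : \det (mkMn 0 f) = 1.
Proof. exact: det_mx00. Qed.

Ltac detcomp := do 4! rewrite !det_mkS !big_ord_recr !big_ord0 /=; rewrite !det_mk0.

Definition co (u : 'rV[R]_4) (k : nat) := u ord0 (inord k).

Lemma sum4 (F : 'I_4 -> R) :
  \sum_i F i = F (inord 0) + F (inord 1) + F (inord 2) + F (inord 3).
Proof.
rewrite !big_ord_recl big_ord0 addr0 !addrA.
by congr (_ + _ + _ + _); congr F; apply: val_inj; rewrite /= inordK.
Qed.

Lemma mulE u f q : (q < 4)%N ->
  co (u *m mkMn 4 f) q = co u 0 * f 0%N q + co u 1 * f 1%N q + co u 2 * f 2%N q + co u 3 * f 3%N q.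
Proof.
move=> hq; rewrite /co mxE sum4 /mkMn !mxE !inordK //.
Qed.

Definition vec4 (x y z t : R) : 'rV[R]_4 := \row_(j < 4) nth 0 [:: x; y; z; t] j.

Lemma co_vec x y z t k : (k < 4)%N -> co (vec4 x y z t) k = nth 0 [:: x; y; z; t] k.
Proof. by move=> hk; rewrite /co mxE inordK. Qed.

Lemma coD u w k : co (u + w) k = co u k + co w k.
Proof. by rewrite /co mxE. Qed.
Lemma coN u k : co (- u) k = - co u k.
Proof. by rewrite /co mxE. Qed.
Lemma co0 k : co 0 k = 0.
Proof. by rewrite /co mxE. Qed.

Lemma vecP u w : co u 0 = co w 0 -> co u 1 = co w 1 -> co u 2 = co w 2 ->
  co u 3 = co w 3 -> u = w.
Proof.
move=> h0 h1 h2 h3; apply/matrixP => i j; rewrite (ord1 i).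
case: j => [[|[|[|[|j]]]] Hj] //.
- by have -> : Ordinal Hj = inord 0 by apply: val_inj; rewrite /= inordK.
- by have -> : Ordinal Hj = inord 1 by apply: val_inj; rewrite /= inordK.
- by have -> : Ordinal Hj = inord 2 by apply: val_inj; rewrite /= inordK.
- by have -> : Ordinal Hj = inord 3 by apply: val_inj; rewrite /= inordK.
Qed.

Lemma tidxE : tidx = inord 3.
Proof. by apply: val_inj; rewrite /= inordK. Qed.

Lemma formE c u v : lorentz_form c u v =
  co u 0 * co v 0 + co u 1 * co v 1 + co u 2 * co v 2 - c ^+ 2 * (co u 3 * co v 3).
Proof. by rewrite /lorentz_form tidxE. Qed.

Lemma ftE c v : future_timelike c v <->
  (co v 0 * co v 0 + co v 1 * co v 1 + co v 2 * co v 2 - c ^+ 2 * (co v 3 * co v 3) < 0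
   /\ 0 < co v 3).
Proof. by rewrite /future_timelike formE tidxE. Qed.

Lemma po_of c f :
  (forall u v, lorentz_form c (u *m mkMn 4 f) (v *m mkMn 4 f) = lorentz_form c u v) ->
  \det (mkMn 4 f) = 1 ->
  (forall v, future_timelike c v -> 0 < co (v *m mkMn 4 f) 3) ->
  proper_orthochronous c (mkMn 4 f).
Proof.
move=> hf hd ht; split => // v hv; split; last by rewrite tidxE; exact: ht.
by rewrite hf; case: hv.
Qed.

Definition fB (k c : R) (i j : nat) : R :=
  let a := (k + k^-1) / 2 in let b := (k - k^-1) / 2 in
  match i, j with
  | 0%N, 0%N => a | 3%N, 0%N => b * c | 0%N, 3%N => b / c | 3%N, 3%N => a
  | 1%N, 1%N => 1 | 2%N, 2%N => 1 | _, _ => 0 end.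
Definition fRxy (i j : nat) : R :=
  match i, j with
  | 0%N, 1%N => 1 | 1%N, 0%N => -1 | 2%N, 2%N => 1 | 3%N, 3%N => 1 | _, _ => 0 end.
Definition fRxz (i j : nat) : R :=
  match i, j with
  | 0%N, 2%N => 1 | 2%N, 0%N => -1 | 1%N, 1%N => 1 | 3%N, 3%N => 1 | _, _ => 0 end.
Definition fD (i j : nat) : R :=
  match i, j with
  | 0%N, 0%N => -1 | 1%N, 1%N => 1 | 2%N, 2%N => -1 | 3%N, 3%N => 1 | _, _ => 0 end.

Lemma po_B c k : 0 < c -> 0 < k -> proper_orthochronous c (mkMn 4 (fB k c)).
Proof.
move=> hc hk; have c0 : c != 0 by rewrite gt_eqF.
have k0 : k != 0 by rewrite gt_eqF.
apply: po_of.
- move=> u v; rewrite !formE !mulE //= /fB /=; field; rewrite ?k0 ?c0 ?andbT //.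
- detcomp; rewrite /fB /=; field; rewrite ?k0 ?c0 ?andbT //.
- move=> v /ftE [h1 h2]; rewrite mulE //= /fB /=.
  set x := co v 0; set t := co v 3.
  have hct : 0 < c * t by rewrite mulr_gt0.
  have hx2 : x * x < (c * t) * (c * t).
    have : 0 <= co v 1 * co v 1 + co v 2 * co v 2 by nra.
    move: h1; rewrite -/x -/t; nra.
  have h3 : 0 < c * t + x by nra.
  have h4 : 0 < c * t - x by nra.
  have ki : 0 < k^-1 by rewrite invr_gt0.
  rewrite !mulr0 !addr0.
  have -> : x * ((k - k^-1) / 2 / c) + t * ((k + k^-1) / 2) =
     (k * (c * t + x) + k^-1 * (c * t - x)) / 2 / c by field; rewrite ?k0 ?c0 ?andbT //.
  by rewrite !divr_gt0 // addr_gt0 // mulr_gt0.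
Qed.

Lemma po_simple c f : (f = fRxy \/ f = fRxz \/ f = fD) -> proper_orthochronous c (mkMn 4 f).
Proof.
move=> hf; apply: po_of.
- by move=> u v; rewrite !formE !mulE //=; case: hf => [->|[->|->]] /=; ring.
- by case: hf => [->|[->|->]]; detcomp; rewrite /=; ring.
- move=> v /ftE [_ h]; rewrite mulE //=.
  by case: hf => [->|[->|->]] /=; rewrite !mulr0 !addr0 !add0r mulr1.
Qed.

Variables (c : R) (hc : 0 < c) (L : 'rV[R]_4 -> Prop) (hL : additive_subgroup L)
    (hinv : forall M : 'M[R]_4, proper_orthochronous c M ->
              forall v, L v -> L (v *m M)).

Lemma L0 : L 0. Proof. by case: hL. Qed.
Lemma LB u w : L u -> L w -> L (u - w). Proof. by case: hL => _; apply. Qed.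
Lemma LN u : L u -> L (- u). Proof. by move=> h; rewrite -sub0r; apply: LB => //; exact: L0. Qed.
Lemma LD u w : L u -> L w -> L (u + w).
Proof. by move=> hu hw; rewrite -[w]opprK; apply: LB => //; exact: LN. Qed.


Let c0 : c != 0. Proof. by rewrite gt_eqF. Qed.

Lemma scale_n (b : R) : b != 0 -> L (vec4 b 0 0 (b / c)) ->
  forall l, L (vec4 l 0 0 (l / c)).
Proof.
move=> b0 hb.
have key : forall l, 0 < l / b -> L (vec4 l 0 0 (l / c)).
  move=> l hl; have := hinv _ (@po_B c (l / b) hc hl) _ hb.
  have l0 : l != 0 by apply: contraTneq hl => ->; rewrite mul0r ltxx.
  suff -> : vec4 b 0 0 (b / c) *m mkMn 4 (fB (l / b) c) = vec4 l 0 0 (l / c) by [].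
  by apply: vecP; rewrite !mulE // !co_vec //= /fB /=; field; rewrite ?b0 ?c0 ?l0.
move=> l; have [hp|hp] := boolP (0 < l / b); first exact: key.
have [->|l0] := eqVneq l 0.
  suff -> : vec4 0 0 0 (0 / c) = 0 by exact: L0.
  by apply: vecP; rewrite !co_vec // co0 mul0r.
have h : l / b != 0 by rewrite mulf_neq0 ?invr_eq0.
move: hp; rewrite -leNgt => hp.
have hn : 0 < (- l) / b by rewrite mulNr oppr_gt0 lt_neqAle h hp.
have := LN _ (key _ hn).
suff -> : - vec4 (- l) 0 0 (- l / c) = vec4 l 0 0 (l / c) by [].
by apply: vecP; rewrite !coN !co_vec //=; field; rewrite ?c0.
Qed.

Lemma all_from_n : (forall l, L (vec4 l 0 0 (l / c))) -> forall w, L w.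
Proof.
move=> hl.
have h3 : forall l, L (vec4 0 l 0 (l / c)).
  move=> l; have := hinv _ (po_simple c fRxy (or_introl erefl)) _ (hl l).
  suff -> : vec4 l 0 0 (l / c) *m mkMn 4 fRxy = vec4 0 l 0 (l / c) by [].
  by apply: vecP; rewrite !mulE // !co_vec //= /fRxy /=; ring.
have h4 : forall l, L (vec4 0 0 l (l / c)).
  move=> l; have := hinv _ (po_simple c fRxz (or_intror (or_introl erefl))) _ (hl l).
  suff -> : vec4 l 0 0 (l / c) *m mkMn 4 fRxz = vec4 0 0 l (l / c) by [].
  by apply: vecP; rewrite !mulE // !co_vec //= /fRxz /=; ring.
have h2 : forall l, L (vec4 (- l) 0 0 (l / c)).
  move=> l; have := hinv _ (po_simple c fD (or_intror (or_intror erefl))) _ (hl l).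
  suff -> : vec4 l 0 0 (l / c) *m mkMn 4 fD = vec4 (- l) 0 0 (l / c) by [].
  by apply: vecP; rewrite !mulE // !co_vec //= /fD /=; ring.
move=> w.
set x := co w 0; set y := co w 1; set z := co w 2; set t := co w 3.
set a := (c * t - y - z + x) / 2; set b := (c * t - y - z - x) / 2.
have := LD _ _ (LD _ _ (LD _ _ (hl a) (h2 b)) (h3 y)) (h4 z).
suff -> : vec4 a 0 0 (a / c) + vec4 (- b) 0 0 (b / c) + vec4 0 y 0 (y / c) + vec4 0 0 z (z / c) = w by [].
by apply: vecP; rewrite !coD !co_vec //= -/x -/y -/z -/t /a /b; field; rewrite ?c0.
Qed.

Let two0 : (0 : R) < 2. Proof. by []. Qed.
Let two0' : (0 : R) < 2^-1. Proof. by rewrite invr_gt0. Qed.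

Lemma from_pq p q : (p != 0) || (q != 0) -> L (vec4 p 0 0 q) -> forall w, L w.
Proof.
move=> hpq hD.
have hB := hinv _ (@po_B c 2 hc two0) _ hD.
have [s0|s0] := eqVneq (p + c * q) 0.
- have hE := hinv _ (po_simple c fD (or_intror (or_intror erefl))) _ (LB _ _ (LB _ _ hB hD) hD).
  have g0 : (- (3 / 4 * (c * q - p))) != 0.
    have h34 : (0:R) < 3/4 by rewrite divr_gt0.
    rewrite oppr_eq0 mulf_neq0 ?(gt_eqF h34) //; apply: contraTneq hpq => h.
    have hp : p = 0 by nra.
    have hq : q = 0 by move/eqP: s0; rewrite hp add0r mulf_eq0 (negbTE c0) => /eqP.
    by rewrite hp hq eqxx.
  apply: all_from_n; apply: (scale_n _ g0).
  move: hE; set E := (X in L X -> _).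
  suff -> : E = vec4 (- (3 / 4 * (c * q - p))) 0 0 (- (3 / 4 * (c * q - p)) / c) by [].
  by apply: vecP; rewrite /E !mulE // !coD !coN !mulE // !co_vec //= /fB /fD /=; field; rewrite ?c0.
- have h32 : (0:R) < 3/2 by rewrite divr_gt0.
  have g0 : (3 / 2 * (p + c * q)) != 0 by rewrite mulf_neq0 ?(gt_eqF h32).
  apply: all_from_n; apply: (scale_n _ g0).
  move: (LB _ _ (LD _ _ hB hB) hD); set E := (X in L X -> _).
  suff -> : E = vec4 (3 / 2 * (p + c * q)) 0 0 (3 / 2 * (p + c * q) / c) by [].
  by apply: vecP; rewrite /E !coD !coN !mulE // !co_vec //= /fB /=; field; rewrite ?c0.
Qed.

Lemma from_v v : L v -> (co v 0 != 0) || (co v 3 != 0) -> forall w, L w.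
Proof.
move=> hv hv0.
have h2 := hinv _ (@po_B c 2 hc two0) _ hv.
have h3 := hinv _ (@po_B c 2^-1 hc two0') _ hv.
apply: (@from_pq (co v 0 / 2) (co v 3 / 2)).
  have h2i : (2:R)^-1 != 0 by rewrite (gt_eqF two0').
  by case/orP: hv0 => h; apply/orP; [left|right]; rewrite mulf_neq0.
move: (LB _ _ (LB _ _ (LD _ _ h2 h3) hv) hv); set E := (X in L X -> _).
suff -> : E = vec4 (co v 0 / 2) 0 0 (co v 3 / 2) by [].
by apply: vecP; rewrite /E !coD !coN !mulE // !co_vec //= /fB /=; field; rewrite ?c0.
Qed.

End S.

Arguments co {R}.
Arguments from_v {R c} hc {L} hL hinv {v}.
Arguments po_simple {R} c f.
Arguments mulE {R}.
Arguments vecP {R}.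
Arguments co0 {R}.
Arguments fRxy {R}.
Arguments fRxz {R}.

Theorem proposition3p8 (R : realType) (c : R) (hc : 0 < c)
    (L : 'rV[R]_4 -> Prop) (hL : additive_subgroup L)
    (hinv : forall M : 'M[R]_4, proper_orthochronous c M ->
              forall v, L v -> L (v *m M)) :
  (forall v, L v <-> v = 0) \/ (forall v, L v).
Proof.
case: (classic (exists v, L v /\ v <> 0)) => [[v [hv nv]]|h].
- right.
  have [E0|E0] := boolP ((co v 0 != 0) || (co v 3 != 0)).
    exact: (from_v hc hL hinv hv E0).
  have [E1|E1] := boolP (co v 1 != 0).
    have hv' := hinv _ (po_simple c fRxy (or_introl erefl)) _ hv.
    apply: (from_v hc hL hinv hv').
    by apply/orP; left; rewrite mulE //= /fRxy /= !mulr0 add0r !addr0 mulrN1 oppr_eq0.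
  have [E2|E2] := boolP (co v 2 != 0).
    have hv' := hinv _ (po_simple c fRxz (or_intror (or_introl erefl))) _ hv.
    apply: (from_v hc hL hinv hv').
    by apply/orP; left; rewrite mulE //= /fRxz /= !mulr0 !add0r !addr0 mulrN1 oppr_eq0.
  exfalso; apply: nv; move: E0 E1 E2; rewrite negb_or !negbK => /andP [/eqP h0 /eqP h3] /eqP h1 /eqP h2.
  by apply: vecP; rewrite co0.
- left => w; split => [hw|->]; last by case: hL.
  by apply: NNPP => nw; apply: h; exists w.
Qed.
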